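(* Let $K$ be a positive definite kernel on $\Omega\subset\mathbb{R}^d$, $X_n=\{x_1,\dots,x_n\}\subset\Omega$ pairwise distinct, $\lambda>0$ and $0\le\mu\le\lambda$, where in case $\mu=0$ the kernel $K$ is assumed strictly positive definite. Then for all $x\in\Omega$ $$Q_n^\lambda(x)^2\le P_n^\mu(x)^2+\lambda\left(1+\Lambda_{n,2}^\mu(x)^2\right),$$ and equality holds if $\mu=\lambda$ and $x\notin X_n$.
   Context: A kernel is positive definite if symmetric with positive semidefinite kernel matrices on pairwise distinct points (strictly: positive definite). $\mathcal{H}$ is the native space (RKHS) of $K$; $\delta(x,y)=1$ if $x=y$, else $0$; $K_\lambda:=K+\lambda\delta$ with native space $\mathcal{H}_\lambda$. Let $A=(K(x_i,x_j))_{i,j=1}^n$. For $f:\Omega\to\mathbb{R}$: $s_n^\mu(f):=\sum_j\alpha_jK(\cdot,x_j)$ with $(A+\mu I)\alpha=(f(x_i))_i$, and $I_n^\lambda(f):=\sum_j\alpha_jK_\lambda(\cdot,x_j)$ with $(A+\lambda I)\alpha=(f(x_i))_i$. $P_n^\mu(x):=\sup_{f\in\mathcal{H},f\ne0}|f(x)-s_n^\mu(f)(x)|/\|f\|_{\mathcal{H}}$ and $Q_n^\lambda(x):=\sup_{f\in\mathcal{H}_\lambda,f\ne0}|f(x)-I_n^\lambda(f)(x)|/\|f\|_{\mathcal{H}_\lambda}$. The Lagrange functions are $\ell_j^\mu:=\sum_{i=1}^n((A+\mu I)^{-1})_{ij}K(\cdot,x_i)$ and the $\ell_2$-Lebesgue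 function is $\Lambda_{n,2}^\mu(x):=\big(\sum_{j=1}^n\ell_j^\mu(x)^2\big)^{1/2}$. *)

(* Defs.v *)
From HB Require Import structures.
From mathcomp Require Import all_boot all_order all_algebra.
From mathcomp Require Import all_classical all_reals.
Set Implicit Arguments. Unset Strict Implicit. Unset Printing Implicit Defensive.
Import Order.TTheory GRing.Theory Num.Theory.
Local Open Scope ring_scope.
Local Open Scope classical_set_scope.

Section Kernels.
Variables (R : realType) (d : nat).
Local Notation V := 'rV[R]_d.

Definition kquad (K : V -> V -> R) (m : nat) (y : 'I_m -> V) (c : 'I_m -> R) : R :=
  \sum_(i < m) \sum_(j < m) c i * c j * K (y i) (y j).

Definition pos_def (Omega : set V) (K : V -> V -> R) : Prop :=
  (forall x y, Omega x -> Omega y -> K x y = K y x) /\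
  (forall (m : nat) (y : 'I_m -> V) (c : 'I_m -> R),
     injective y -> (forall i, Omega (y i)) -> 0 <= kquad K y c).

Definition strict_pos_def (Omega : set V) (K : V -> V -> R) : Prop :=
  pos_def Omega K /\
  (forall (m : nat) (y : 'I_m -> V) (c : 'I_m -> R),
     injective y -> (forall i, Omega (y i)) -> (exists i, c i != 0) ->
     0 < kquad K y c).

Definition kdelta (x y : V) : R := if x == y then 1 else 0.
Definition kreg (K : V -> V -> R) (lam : R) : V -> V -> R :=
  fun x y => K x y + lam * kdelta x y.

(* Native space (RKHS) of K on Omega, via the standard characterisation:
   f in H iff there is C >= 0 with
     (sum_i c_i f(y_i))^2 <= C * sum_ij c_i c_j K(y_i,y_j)
   for all finite families of points of Omega; ||f||_H^2 is the least such C. *)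
Definition native_bounds (Omega : set V) (K : V -> V -> R) (f : V -> R) : set R :=
  [set C | 0 <= C /\
     forall (m : nat) (y : 'I_m -> V) (c : 'I_m -> R),
       (forall i, Omega (y i)) ->
       (\sum_(i < m) c i * f (y i)) ^+ 2 <= C * kquad K y c].

Definition in_native (Omega : set V) (K : V -> V -> R) (f : V -> R) : Prop :=
  native_bounds Omega K f !=set0.

Definition native_norm (Omega : set V) (K : V -> V -> R) (f : V -> R) : R :=
  Num.sqrt (inf (native_bounds Omega K f)).

Definition nonzero_on (Omega : set V) (f : V -> R) : Prop :=
  exists y, Omega y /\ f y != 0.

Definition kmat (K : V -> V -> R) (n : nat) (X : 'I_n -> V) : 'M[R]_n :=
  \matrix_(i, j) K (X i) (X j).

Definition coeffs (K : V -> V -> R) (n : nat) (X : 'I_n -> V) (mu : R)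
    (f : V -> R) : 'cV[R]_n :=
  invmx (kmat K X + mu%:M) *m \col_i f (X i).

Definition s_approx (K : V -> V -> R) (n : nat) (X : 'I_n -> V) (mu : R)
    (f : V -> R) : V -> R :=
  fun x => \sum_(j < n) coeffs K X mu f j 0 * K x (X j).

Definition I_approx (K : V -> V -> R) (n : nat) (X : 'I_n -> V) (lam : R)
    (f : V -> R) : V -> R :=
  fun x => \sum_(j < n) coeffs K X lam f j 0 * kreg K lam x (X j).

Definition P_fun (Omega : set V) (K : V -> V -> R) (n : nat) (X : 'I_n -> V)
    (mu : R) (x : V) : R :=
  sup [set r | exists f, in_native Omega K f /\ nonzero_on Omega f /\
         r = `|f x - s_approx K X mu f x| / native_norm Omega K f].

Definition Q_fun (Omega : set V) (K : V -> V -> R) (n : nat) (X : 'I_n -> V)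
    (lam : R) (x : V) : R :=
  sup [set r | exists f, in_native Omega (kreg K lam) f /\ nonzero_on Omega f /\
         r = `|f x - I_approx K X lam f x| / native_norm Omega (kreg K lam) f].

Definition lagrange (K : V -> V -> R) (n : nat) (X : 'I_n -> V) (mu : R)
    (j : 'I_n) (x : V) : R :=
  \sum_(i < n) invmx (kmat K X + mu%:M) i j * K x (X i).

Definition lebesgue2 (K : V -> V -> R) (n : nat) (X : 'I_n -> V) (mu : R)
    (x : V) : R :=
  Num.sqrt (\sum_(j < n) lagrange K X mu j x ^+ 2).

End Kernels.

(* Main.v *)
Require Import Defs.
From HB Require Import structures.
From mathcomp Require Import all_boot all_order all_algebra.
From mathcomp Require Import all_classical all_reals.
From mathcomp Require Import ring lra.
Import Order.TTheory GRing.Theory Num.Theory.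
Local Open Scope ring_scope.
Local Open Scope classical_set_scope.
Set Implicit Arguments. Unset Strict Implicit.

Lemma kquad_kreg {R : realType} {d : nat} (k : 'rV[R]_d -> 'rV[R]_d -> R) l m
  (y : 'I_m -> 'rV[R]_d) c :
  kquad (kreg k l) y c = kquad k y c + l * kquad (@kdelta R d) y c.
Proof.
rewrite /kquad /kreg mulr_sumr -big_split; apply: eq_bigr => i _.
rewrite mulr_sumr -big_split; apply: eq_bigr => j _ /=; ring.
Qed.

Lemma sum_delta {R : realType} n (k : 'I_n) (g : 'I_n -> R) :
  \sum_(i < n) (i == k)%:R * g i = g k.
Proof.
rewrite (bigD1 k) //= eqxx mul1r big1 ?addr0 // => i /negbTE ->; by rewrite mul0r.
Qed.

Lemma kquad_delta_inj {R : realType} {d : nat} m (y : 'I_m -> 'rV[R]_d) c :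
  injective y -> kquad (@kdelta R d) y c = \sum_(i < m) c i ^+ 2.
Proof.
move=> iy; rewrite /kquad; apply: eq_bigr => i _.
rewrite (bigD1 i) //= /kdelta eqxx mulr1 big1 ?addr0 ?expr2 // => j ji.
by rewrite (inj_eq iy) eq_sym (negbTE ji) mulr0.
Qed.

Lemma kquad_mx {R : realType} {d : nat} (k : 'rV[R]_d -> 'rV[R]_d -> R) m
  (y : 'I_m -> 'rV[R]_d) c :
  kquad k y c = ((\row_i c i) *m kmat k y *m (\row_i c i)^T) 0 0.
Proof.
rewrite /kquad mxE exchange_big; apply: eq_bigr => j _.
rewrite !mxE mulr_suml; apply: eq_bigr => i _; rewrite !mxE; ring.
Qed.

Lemma reindex_sum {R : realType} m (phi : 'I_m -> 'I_m) (c : 'I_m -> R) (F : 'I_m -> R) :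
  \sum_(b < m) c b * F (phi b) =
  \sum_(b' < m) (\sum_(b < m | phi b == b') c b) * F b'.
Proof.
rewrite (partition_big phi predT) //=; apply: eq_bigr => b' _.
rewrite mulr_suml; apply: eq_bigr => b /eqP <-; by [].
Qed.

Lemma kquad_merge {R : realType} {d : nat} (k : 'rV[R]_d -> 'rV[R]_d -> R) m
  (y : 'I_m -> 'rV[R]_d) c (phi : 'I_m -> 'I_m) :
  (forall a, y (phi a) = y a) ->
  kquad k y c = kquad k y (fun b' => \sum_(b < m | phi b == b') c b).
Proof.
move=> hphi; rewrite /kquad.
transitivity (\sum_(i < m) c i * (\sum_(j < m) c j * k (y (phi i)) (y (phi j)))).
  apply: eq_bigr => i _; rewrite mulr_sumr; apply: eq_bigr => j _; rewrite !hphi; ring.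
rewrite (reindex_sum phi c (fun i' => \sum_(j < m) c j * k (y i') (y (phi j)))).
apply: eq_bigr => i _.
rewrite (reindex_sum phi c (fun j' => k (y i) (y j'))) mulr_sumr.
apply: eq_bigr => j _; ring.
Qed.

Lemma kquad_drop {R : realType} {d : nat} (k : 'rV[R]_d -> 'rV[R]_d -> R) m
  (y : 'I_m.+1 -> 'rV[R]_d) c (j : 'I_m.+1) :
  c j = 0 ->
  kquad k y c = kquad k (fun a => y (lift j a)) (fun a => c (lift j a)).
Proof.
move=> cj; rewrite /kquad (bigD1_ord j) //= big1 ?add0r; last first.
  by move=> i _; rewrite cj !mul0r.
apply: eq_bigr => i _; rewrite (bigD1_ord j) //= cj mulr0 mul0r add0r.
by [].
Qed.

Lemma psd_all {R : realType} {d : nat} (Omega : set 'rV[R]_d)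
  (k : 'rV[R]_d -> 'rV[R]_d -> R) :
  (forall m (y : 'I_m -> 'rV[R]_d) c, injective y -> (forall i, Omega (y i)) ->
     0 <= kquad k y c) ->
  forall m (y : 'I_m -> 'rV[R]_d) c, (forall i, Omega (y i)) -> 0 <= kquad k y c.
Proof.
move=> hinj; elim=> [|m IH] y c hy.
  by rewrite /kquad big_ord0.
have [/injectiveP iy|/injectivePn [i [j nij eij]]] := boolP (injectiveb y).
  exact: hinj.
pose phi := fun a : 'I_m.+1 => if a == j then i else a.
have hphi : forall a, y (phi a) = y a.
  by move=> a; rewrite /phi; case: eqP => // ->.
rewrite (kquad_merge k c hphi).
rewrite (@kquad_drop R d k m y _ j); first by apply: IH => a.
apply: big1 => b /eqP; rewrite /phi; case: eqP => [_ eb|nbj eb].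
  by move: nij; rewrite eb eqxx.
by move: nbj; rewrite eb.
Qed.


Lemma disc {R : realType} (a B q : R) : 0 < q ->
  (forall t, 0 <= a + 2 * t * B + t ^+ 2 * q) -> B ^+ 2 <= a * q.
Proof.
move=> q0 H; have := H (- B / q).
have qn : q != 0 by rewrite gt_eqF.
have -> : a + 2 * (- B / q) * B + (- B / q) ^+ 2 * q = a - B ^+ 2 / q by field.
by rewrite subr_ge0 ler_pdivrMr.
Qed.

Lemma cs_kernel {R : realType} {d : nat} (Omega : set 'rV[R]_d)
  (k : 'rV[R]_d -> 'rV[R]_d -> R) :
  (forall x y, Omega x -> Omega y -> k x y = k y x) ->
  (forall m (y : 'I_m -> 'rV[R]_d) c, (forall i, Omega (y i)) -> 0 <= kquad k y c) ->
  forall m1 (y1 : 'I_m1 -> 'rV[R]_d) d1 m2 (y2 : 'I_m2 -> 'rV[R]_d) c,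
  (forall i, Omega (y1 i)) -> (forall i, Omega (y2 i)) -> 0 < kquad k y2 c ->
  (\sum_(a < m1) \sum_(i < m2) d1 a * c i * k (y1 a) (y2 i)) ^+ 2
    <= kquad k y1 d1 * kquad k y2 c.
Proof.
move=> hsym hpsd m1 y1 d1 m2 y2 c h1 h2 q0.
apply: disc => // t.
set B := \sum_(a < m1) _.
pose w := fun i : 'I_(m1 + m2) => match fintype.split i with inl a => y1 a | inr b => y2 b end.
pose e := fun i : 'I_(m1 + m2) => match fintype.split i with inl a => d1 a | inr b => t * c b end.
have sl : forall a, fintype.split (lshift m2 a) = inl a := fun a => unsplitK (@inl _ 'I_m2 a).
have sr : forall b, fintype.split (rshift m1 b) = inr b := fun b => unsplitK (@inr 'I_m1 _ b).
have wl : forall a, w (lshift m2 a) = y1 a by move=> a; rewrite /w sl.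
have wr : forall b, w (rshift m1 b) = y2 b by move=> b; rewrite /w sr.
have el : forall a, e (lshift m2 a) = d1 a by move=> a; rewrite /e sl.
have er : forall b, e (rshift m1 b) = t * c b by move=> b; rewrite /e sr.
have hw : forall i, Omega (w i) by move=> i; rewrite /w; case: (fintype.split i).
have := hpsd _ w e hw.
suff -> : kquad k w e = kquad k y1 d1 + 2 * t * B + t ^+ 2 * kquad k y2 c by [].
rewrite /kquad big_split_ord /=.
rewrite (eq_bigr (fun a => \sum_(j < m1) d1 a * d1 j * k (y1 a) (y1 j) +
   t * \sum_(b < m2) d1 a * c b * k (y1 a) (y2 b))); last first.
  move=> a _; rewrite big_split_ord /= mulr_sumr; congr (_ + _).
    by apply: eq_bigr => j _; rewrite wl el wl el.
  by apply: eq_bigr => j _; rewrite wl el wr er; ring.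
rewrite [X in _ + X](eq_bigr (fun b => t * \sum_(a < m1) d1 a * c b * k (y1 a) (y2 b) +
   t ^+ 2 * \sum_(b' < m2) c b * c b' * k (y2 b) (y2 b'))); last first.
  move=> b _; rewrite big_split_ord /= !mulr_sumr; congr (_ + _).
    by apply: eq_bigr => j _; rewrite wr er wl el hsym //; ring.
  by apply: eq_bigr => j _; rewrite wr er wr er; ring.
rewrite !big_split /= -!mulr_sumr.
have -> : \sum_(b < m2) \sum_(a < m1) d1 a * c b * k (y1 a) (y2 b) = B by rewrite /B exchange_big.
rewrite -/B; ring.
Qed.


Lemma bound_inf {R : realType} {d : nat} (Omega : set 'rV[R]_d)
  (k : 'rV[R]_d -> 'rV[R]_d -> R) m (z : 'I_m -> 'rV[R]_d) c f :
  (forall i, Omega (z i)) -> 0 <= kquad k z c -> in_native Omega k f ->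
  (\sum_(i < m) c i * f (z i)) ^+ 2 <= inf (native_bounds Omega k f) * kquad k z c.
Proof.
move=> hz kq0 [C0 BC0].
have [kqe|kqn] := eqVneq (kquad k z c) 0.
  by case: BC0 => _ /(_ m z c hz); rewrite kqe !mulr0.
have kqp : 0 < kquad k z c by rewrite lt_neqAle eq_sym kqn.
rewrite -ler_pdivrMr //; apply: lb_le_inf; first by exists C0.
by move=> C [_ HC]; rewrite ler_pdivrMr //; apply: HC.
Qed.

Lemma inf_ge0 {R : realType} {d : nat} (Omega : set 'rV[R]_d)
  (k : 'rV[R]_d -> 'rV[R]_d -> R) f :
  in_native Omega k f -> 0 <= inf (native_bounds Omega k f).
Proof. by move=> hn; apply: lb_le_inf => // C [] . Qed.

Lemma ratio_le {R : realType} {d : nat} (Omega : set 'rV[R]_d)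
  (k : 'rV[R]_d -> 'rV[R]_d -> R) m (z : 'I_m -> 'rV[R]_d) c f :
  (forall i, Omega (z i)) -> 0 <= kquad k z c -> in_native Omega k f ->
  `|\sum_(i < m) c i * f (z i)| / native_norm Omega k f <= Num.sqrt (kquad k z c).
Proof.
move=> hz kq0 hn; rewrite /native_norm.
have := bound_inf hz kq0 hn; have := inf_ge0 hn.
set I := inf _; set s := \sum_(i < m) _; move=> I0 hb.
have [Ie|In] := eqVneq I 0.
  by rewrite Ie sqrtr0 invr0 mulr0 sqrtr_ge0.
have Ip : 0 < I by rewrite lt_neqAle eq_sym In.
rewrite ler_pdivrMr ?sqrtr_gt0 // -sqrtrM // -sqrtr_sqr ler_sqrt.
  by rewrite mulrC.
by rewrite mulr_ge0.
Qed.

Lemma sup_ratio {R : realType} {d : nat} (Omega : set 'rV[R]_d)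
  (k : 'rV[R]_d -> 'rV[R]_d -> R) :
  (forall x y, Omega x -> Omega y -> k x y = k y x) ->
  (forall m (y : 'I_m -> 'rV[R]_d) c, (forall i, Omega (y i)) -> 0 <= kquad k y c) ->
  forall m (z : 'I_m -> 'rV[R]_d) c, (forall i, Omega (z i)) ->
  sup [set r | exists f, in_native Omega k f /\ nonzero_on Omega f /\
         r = `|\sum_(i < m) c i * f (z i)| / native_norm Omega k f]
  = Num.sqrt (kquad k z c).
Proof.
move=> hsym hpsd m z c hz.
have kq0 := hpsd m z c hz.
set S := [set r | _].
have hub : ubound S (Num.sqrt (kquad k z c)).
  by move=> r [f [hn [_ ->]]]; apply: ratio_le.
have [kqe|kqn] := eqVneq (kquad k z c) 0.
  rewrite kqe sqrtr0.
  have [[r Sr]|nS] := pselect (exists r, S r).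
    apply/eqP; rewrite eq_le; apply/andP; split.
      by apply: ge_sup; [exists r | rewrite -sqrtr0 -kqe].
    have r0 : 0 <= r by case: Sr => f [_ [_ ->]]; rewrite divr_ge0 ?sqrtr_ge0.
    apply: le_trans r0 _; apply: ub_le_sup => //.
    by exists (Num.sqrt (kquad k z c)).
  have -> : S = set0.
    by apply/funext => r; apply/propext; split => // Sr; exact: nS (ex_intro _ r Sr).
  exact: sup0.
have kqp : 0 < kquad k z c by rewrite lt_neqAle eq_sym kqn.
set q := kquad k z c in kq0 kqn kqp hub *.
pose f0 := fun y => \sum_(i < m) c i * k y (z i).
have hsum : \sum_(i < m) c i * f0 (z i) = q.
  rewrite /q /kquad; apply: eq_bigr => i _; rewrite /f0 mulr_sumr.
  by apply: eq_bigr => j _; rewrite mulrA.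
have qB : native_bounds Omega k f0 q.
  split => // m' y' d' hy'.
  have -> : \sum_(a < m') d' a * f0 (y' a) =
            \sum_(a < m') \sum_(i < m) d' a * c i * k (y' a) (z i).
    by apply: eq_bigr => a _; rewrite /f0 mulr_sumr; apply: eq_bigr => i _; rewrite mulrA.
  by rewrite [q * _]mulrC; apply: (cs_kernel hsym hpsd).
have hinf : inf (native_bounds Omega k f0) = q.
  apply/eqP; rewrite eq_le; apply/andP; split.
    by apply: ge_inf => //; exists 0 => C [].
  apply: lb_le_inf; first by exists q.
  move=> C [_ HC]; have := HC m z c hz; rewrite hsum expr2.
  by rewrite ler_pM2r.
have Sq : S (Num.sqrt q).
  exists f0; split; first by exists q.
  split.
    have [[i hi]|ni] := pselect (exists i, f0 (z i) != 0).
      by exists (z i).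
    move: kqn; rewrite -hsum big1 ?eqxx // => i _.
    have [->|h] := eqVneq (f0 (z i)) 0; first by rewrite mulr0.
    by exfalso; apply: ni; exists i.
  rewrite hsum /native_norm hinf ger0_norm //.
  have sq0 : Num.sqrt q != 0 by rewrite gt_eqF // sqrtr_gt0.
  by rewrite -[X in X / _](sqr_sqrtr kq0) expr2 mulfK.
apply/eqP; rewrite eq_le; apply/andP; split.
  by apply: ge_sup => //; exists (Num.sqrt q).
by apply: ub_le_sup => //; exists (Num.sqrt q).
Qed.


Definition zext {R : realType} {d n : nat} (x : 'rV[R]_d) (X : 'I_n -> 'rV[R]_d)
  : 'I_n.+1 -> 'rV[R]_d := fun i => if unlift ord0 i is Some j then X j else x.
Definition cext {R : realType} {n : nat} (v : 'I_n -> R) : 'I_n.+1 -> R :=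
  fun i => if unlift ord0 i is Some j then - v j else 1.

Lemma zext0 {R : realType} {d n : nat} (x : 'rV[R]_d) (X : 'I_n -> 'rV[R]_d) :
  zext x X ord0 = x.
Proof. by rewrite /zext unlift_none. Qed.
Lemma zextS {R : realType} {d n : nat} (x : 'rV[R]_d) (X : 'I_n -> 'rV[R]_d) j :
  zext x X (lift ord0 j) = X j.
Proof. by rewrite /zext liftK. Qed.
Lemma cext0 {R : realType} {n : nat} (v : 'I_n -> R) : cext v ord0 = 1.
Proof. by rewrite /cext unlift_none. Qed.
Lemma cextS {R : realType} {n : nat} (v : 'I_n -> R) j : cext v (lift ord0 j) = - v j.
Proof. by rewrite /cext liftK. Qed.

Definition Fq {R : realType} {d n : nat} (k : 'rV[R]_d -> 'rV[R]_d -> R)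
  (x : 'rV[R]_d) (X : 'I_n -> 'rV[R]_d) (v : 'I_n -> R) : R :=
  k x x - \sum_(i < n) v i * k x (X i) - \sum_(i < n) v i * k (X i) x
  + \sum_(i < n) \sum_(j < n) v i * v j * k (X i) (X j).

Lemma ext_sum {R : realType} {d n : nat} (x : 'rV[R]_d) (X : 'I_n -> 'rV[R]_d) v
  (f : 'rV[R]_d -> R) :
  \sum_(a < n.+1) cext v a * f (zext x X a) = f x - \sum_(i < n) v i * f (X i).
Proof.
rewrite big_ord_recl cext0 zext0 mul1r -sumrN; congr (_ + _).
by apply: eq_bigr => i _; rewrite cextS zextS mulNr.
Qed.

Lemma ext_quad {R : realType} {d n : nat} (k : 'rV[R]_d -> 'rV[R]_d -> R)
  (x : 'rV[R]_d) (X : 'I_n -> 'rV[R]_d) v :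
  kquad k (zext x X) (cext v) = Fq k x X v.
Proof.
rewrite /kquad /Fq big_ord_recl big_ord_recl cext0 zext0.
have h1 : \sum_(i < n) 1 * cext v (lift ord0 i) * k x (zext x X (lift ord0 i))
          = - \sum_(i < n) v i * k x (X i).
  by rewrite -sumrN; apply: eq_bigr => i _; rewrite cextS zextS; ring.
have h2 : \sum_(i < n) \sum_(b < n.+1) cext v (lift ord0 i) * cext v b *
             k (zext x X (lift ord0 i)) (zext x X b)
   = - \sum_(i < n) v i * k (X i) x + \sum_(i < n) \sum_(j < n) v i * v j * k (X i) (X j).
  rewrite -sumrN -big_split; apply: eq_bigr => i _ /=.
  rewrite big_ord_recl cext0 zext0 cextS zextS; congr (_ + _); first by ring.
  by apply: eq_bigr => j _; rewrite cextS zextS; ring.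
rewrite h1 h2; ring.
Qed.

Lemma approx_lagr {R : realType} {d n : nat} (k : 'rV[R]_d -> 'rV[R]_d -> R)
  (x : 'rV[R]_d) (X : 'I_n -> 'rV[R]_d) (M : 'M[R]_n) (f : 'rV[R]_d -> R) :
  \sum_(j < n) (M *m \col_i f (X i)) j 0 * k x (X j)
  = \sum_(i < n) (\sum_(j < n) M j i * k x (X j)) * f (X i).
Proof.
under eq_bigr do rewrite !mxE big_distrl /=.
rewrite exchange_big; apply: eq_bigr => i _; rewrite big_distrl.
by apply: eq_bigr => j _; rewrite !mxE mulrAC.
Qed.

Lemma Fq_ek {R : realType} {d n : nat} (k : 'rV[R]_d -> 'rV[R]_d -> R)
  (X : 'I_n -> 'rV[R]_d) (i0 : 'I_n) :
  Fq k (X i0) X (fun i => (i == i0)%:R) = 0.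
Proof.
rewrite /Fq !sum_delta.
rewrite (eq_bigr (fun i => (i == i0)%:R * \sum_(j < n) (j == i0)%:R * k (X i) (X j))); last first.
  by move=> i _; rewrite mulr_sumr; apply: eq_bigr => j _; ring.
rewrite sum_delta sum_delta; ring.
Qed.


Lemma Fq_min {R : realType} {d n : nat} (Omega : set 'rV[R]_d)
  (k : 'rV[R]_d -> 'rV[R]_d -> R) (x : 'rV[R]_d) (X : 'I_n -> 'rV[R]_d) (M : 'M[R]_n) :
  (forall x y, Omega x -> Omega y -> k x y = k y x) ->
  Omega x -> (forall i, Omega (X i)) ->
  (forall c, 0 <= kquad k X c) ->
  M *m kmat k X = 1%:M ->
  forall w, Fq k x X (fun i => \sum_(j < n) M j i * k x (X j)) <= Fq k x X w.
Proof.
move=> hsym hx hX hpsd hM w.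
set G := kmat k X.
pose b : 'rV[R]_n := \row_j k x (X j).
pose rv := fun v : 'I_n -> R => (\row_i v i : 'rV[R]_n).
pose L := fun a : 'rV[R]_n => (a *m b^T) 0 0.
pose Q := fun a c : 'rV[R]_n => (a *m G *m c^T) 0 0.
have addE : forall A B : 'M[R]_1, (A + B) 0 0 = A 0 0 + B 0 0 by move=> A B; rewrite mxE.
have tr11 : forall A : 'M[R]_1, A 0 0 = A^T 0 0 by move=> A; rewrite mxE.
have GT : G^T = G by apply/matrixP => i j; rewrite !mxE hsym.
have GM : G *m M^T = 1%:M by rewrite -[G in G *m _]GT -trmx_mul hM trmx1.
have Fm : forall v, Fq k x X v = k x x - 2 * L (rv v) + Q (rv v) (rv v).
  move=> v; rewrite /Q /rv -kquad_mx /Fq /kquad.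
  have -> : \sum_(i < n) v i * k (X i) x = \sum_(i < n) v i * k x (X i).
    by apply: eq_bigr => i _; rewrite hsym.
  have -> : L (\row_i v i) = \sum_(i < n) v i * k x (X i).
    by rewrite /L mxE; apply: eq_bigr => i _; rewrite !mxE.
  ring.
set u := fun i => _.
have hu : rv u = b *m M.
  by apply/rowP => i; rewrite !mxE; apply: eq_bigr => j _; rewrite !mxE mulrC.
rewrite !Fm hu.
set p := b *m M.
set D := rv w - p.
have rD : rv w = p + D by rewrite /D addrC subrK.
rewrite rD.
have QpE : forall a, Q p a = L a.
  move=> a; rewrite /Q /p -!mulmxA (mulmxA M) hM mul1mx /L tr11 trmx_mul trmxK.
  by [].
have QDp : Q D p = L D.
  by rewrite /Q /p trmx_mul -!mulmxA (mulmxA G) GM mul1mx.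
have Qsplit : Q (p + D) (p + D) = Q p p + Q p D + Q D p + Q D D.
  have trD : (p + D)^T = p^T + D^T by apply/matrixP => i j; rewrite !mxE.
  rewrite /Q trD !mulmxDl !mulmxDr !addE; ring.
have LD : L (p + D) = L p + L D by rewrite /L mulmxDl addE.
have QDD : 0 <= Q D D.
  have -> : D = \row_i D 0 i by apply/rowP => i; rewrite mxE.
  by rewrite /Q -kquad_mx.
rewrite Qsplit LD !QpE QDp.
lra.
Qed.


Lemma kmat_kreg {R : realType} {d n : nat} (K : 'rV[R]_d -> 'rV[R]_d -> R) lam
  (X : 'I_n -> 'rV[R]_d) :
  injective X -> kmat (kreg K lam) X = kmat K X + lam%:M.
Proof.
move=> iX; apply/matrixP => i j; rewrite !mxE /kreg /kdelta (inj_eq iX).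
by case: (i == j); rewrite ?mulr1 ?mulr0.
Qed.

Lemma kreg_unit {R : realType} {d n : nat} (K : 'rV[R]_d -> 'rV[R]_d -> R) lam
  (X : 'I_n -> 'rV[R]_d) :
  injective X -> 0 < lam -> (forall c, 0 <= kquad K X c) ->
  kmat (kreg K lam) X \in unitmx.
Proof.
move=> iX l0 hpsd; set G := kmat _ X.
have hv : forall v : 'rV[R]_n, v *m G = 0 -> v = 0.
  move=> v vG.
  have rv : \row_i v 0 i = v by apply/rowP => i; rewrite mxE.
  have e0 : kquad (kreg K lam) X (fun i => v 0 i) = 0.
    by rewrite kquad_mx rv vG mul0mx mxE.
  move: e0; rewrite kquad_kreg kquad_delta_inj //.
  have h1 := hpsd (fun i => v 0 i).
  have h2 : 0 <= \sum_(i < n) v 0 i ^+ 2 by apply: sumr_ge0 => i _; exact: sqr_ge0.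
  move=> e0.
  have s0 : \sum_(i < n) v 0 i ^+ 2 = 0.
    apply/eqP; rewrite eq_le h2 andbT.
    have : lam * \sum_(i < n) v 0 i ^+ 2 <= 0 by lra.
    by rewrite pmulr_rle0.
  apply/rowP => i; rewrite !mxE; apply/eqP; rewrite -sqrf_eq0; apply/eqP.
  by apply: (psumr_eq0P _ s0) => // j _; exact: sqr_ge0.
rewrite -row_free_unit -kermx_eq0; apply/eqP/row_matrixP => i.
rewrite row0; apply: hv; apply/sub_kermxP; exact: row_sub.
Qed.

Unset Implicit Arguments.
Lemma zext_inj {R : realType} {d n : nat} (x : 'rV[R]_d) (X : 'I_n -> 'rV[R]_d) :
  injective X -> (forall i, X i != x) -> injective (zext x X).
Proof.
move=> iX nxi a b.
case: (unliftP ord0 a) => [ja|] ->; case: (unliftP ord0 b) => [jb|] ->;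
  rewrite ?zextS ?zext0 => e //.
- by rewrite (iX _ _ e).
- by move: (nxi ja); rewrite e eqxx.
- by move: (nxi jb); rewrite e eqxx.
Qed.

Theorem proposition3p4 (R : realType) (d : nat) (Omega : set 'rV[R]_d)
    (K : 'rV[R]_d -> 'rV[R]_d -> R) (n : nat) (X : 'I_n -> 'rV[R]_d)
    (lam mu : R) :
  pos_def Omega K ->
  (forall i, Omega (X i)) -> injective X ->
  0 < lam -> 0 <= mu -> mu <= lam ->
  (mu = 0 -> strict_pos_def Omega K) ->
  forall x, Omega x ->
    Q_fun Omega K X lam x ^+ 2
      <= P_fun Omega K X mu x ^+ 2 + lam * (1 + lebesgue2 K X mu x ^+ 2)
    /\ (mu = lam -> (forall i, X i != x) ->
        Q_fun Omega K X lam x ^+ 2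
          = P_fun Omega K X mu x ^+ 2 + lam * (1 + lebesgue2 K X mu x ^+ 2)).
Proof.
move=> [hsym hpsdi] hX iX l0 m0 ml hs x hx.
have psdK := psd_all hpsdi.
have symL : forall a b, Omega a -> Omega b -> kreg K lam a b = kreg K lam b a.
  by move=> a b ha hb; rewrite /kreg /kdelta hsym // eq_sym.
have psdLi : forall m (y : 'I_m -> 'rV[R]_d) c, injective y -> (forall i, Omega (y i)) ->
    0 <= kquad (kreg K lam) y c.
  move=> m y c iy hy; rewrite kquad_kreg kquad_delta_inj //; apply: addr_ge0.
    exact: hpsdi.
  by apply: mulr_ge0; [exact: ltW | apply: sumr_ge0 => i _; exact: sqr_ge0].
have psdL := psd_all psdLi.
have hz : forall i, Omega (zext x X i) by move=> i; rewrite /zext; case: (unlift ord0 i).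
pose l := fun i => Defs.lagrange K X mu i x.
pose M := invmx (kmat K X + lam%:M).
pose u := fun i => \sum_(j < n) M j i * kreg K lam x (X j).
have Peq : P_fun Omega K X mu x ^+ 2 = Fq K x X l.
  rewrite /P_fun.
  have -> : [set r | exists f, in_native Omega K f /\ nonzero_on Omega f /\
         r = `|f x - s_approx K X mu f x| / native_norm Omega K f] =
       [set r | exists f, in_native Omega K f /\ nonzero_on Omega f /\
         r = `|\sum_(a < n.+1) cext l a * f (zext x X a)| / native_norm Omega K f].
    apply/funext => r; apply/propext; split => -[f [h1 [h2 ->]]]; exists f;
      (split; [by [] | split; [by [] | ]]);
      by rewrite ext_sum /s_approx /coeffs approx_lagr.
  rewrite (sup_ratio hsym psdK) // ext_quad sqr_sqrtr // -ext_quad; exact: psdK.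
have Qeq : Q_fun Omega K X lam x ^+ 2 = Fq (kreg K lam) x X u.
  rewrite /Q_fun.
  have -> : [set r | exists f, in_native Omega (kreg K lam) f /\ nonzero_on Omega f /\
         r = `|f x - I_approx K X lam f x| / native_norm Omega (kreg K lam) f] =
       [set r | exists f, in_native Omega (kreg K lam) f /\ nonzero_on Omega f /\
         r = `|\sum_(a < n.+1) cext u a * f (zext x X a)| / native_norm Omega (kreg K lam) f].
    apply/funext => r; apply/propext; split => -[f [h1 [h2 ->]]]; exists f;
      (split; [by [] | split; [by [] | ]]);
      by rewrite ext_sum /I_approx /coeffs approx_lagr.
  rewrite (sup_ratio symL psdL) // ext_quad sqr_sqrtr // -ext_quad; exact: psdL.
have Leb : lebesgue2 K X mu x ^+ 2 = \sum_(i < n) l i ^+ 2.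
  by rewrite /lebesgue2 sqr_sqrtr // sumr_ge0 // => i _; exact: sqr_ge0.
have hpsdX : forall c, 0 <= kquad K X c by move=> c; exact: hpsdi.
have hM : M *m kmat (kreg K lam) X = 1%:M.
  rewrite /M -(kmat_kreg _ _ iX) mulVmx //; exact: kreg_unit.
have hmin := Fq_min symL hx hX (fun c => psdL _ X c hX) hM.
have Flin : forall w, Fq (kreg K lam) x X w = Fq K x X w + lam * Fq (@kdelta R d) x X w.
  by move=> w; rewrite -!ext_quad kquad_kreg.
have P0 : 0 <= Fq K x X l by rewrite -Peq sqr_ge0.
have S0 : 0 <= \sum_(i < n) l i ^+ 2 by apply: sumr_ge0 => i _; exact: sqr_ge0.
have [[k0 xk]|nx] := pselect (exists k0, X k0 = x).
  split; last by move=> _ /(_ k0); rewrite xk eqxx.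
  have h0 : Fq (kreg K lam) x X (fun i => (i == k0)%:R) = 0 by rewrite -xk Fq_ek.
  have := hmin (fun i => (i == k0)%:R); rewrite h0 => hQ.
  rewrite Peq Qeq Leb.
  have : 0 <= lam * (1 + \sum_(i < n) l i ^+ 2) by apply: mulr_ge0; [exact: ltW | lra].
  lra.
have nxi : forall i, X i != x by move=> i; apply/eqP => e; apply: nx; exists i.
have Fd : forall w, Fq (@kdelta R d) x X w = 1 + \sum_(i < n) w i ^+ 2.
  move=> w; rewrite -ext_quad kquad_delta_inj; last exact: zext_inj.
  rewrite big_ord_recl cext0 expr1n; congr (_ + _).
  by apply: eq_bigr => i _; rewrite cextS sqrrN.
split.
  rewrite Peq Qeq Leb; apply: le_trans (hmin l) _; by rewrite Flin Fd.
move=> ml' _; rewrite Peq Qeq Leb Flin Fd.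
suff -> : u = l by [].
rewrite /u /l /Defs.lagrange /M ml'; apply/funext => i; apply: eq_bigr => j _.
by rewrite /kreg /kdelta eq_sym (negbTE (nxi j)) mulr0 addr0.
Qed.
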